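(* Let $G=(V,E,w)$ be a graph with positive edge weights, let $e\in E$, and let $L^{\mathrm{down}}=\widetilde\partial^{T}\widetilde\partial$ be the down Laplacian of $G$. Then $$ w_e\, B_e^{2} = \big((L^{\mathrm{down}})^{+}\big)_{ee} = \big\|1_e^{T}\widetilde\partial^{+}\big\|^{2}, $$ where $1_e^{T}\widetilde\partial^{+}$ is the row of $\widetilde\partial^{+}$ corresponding to $e$.
   Context: $G=(V,E,w)$ is an undirected graph with $n=|V|$ vertices, $m=|E|$ edges and positive weights $w_e$. Each edge $e=\{s,t\}$ is given an arbitrary fixed orientation $(s,t)$. The boundary (signed incidence) matrix $\partial\in\mathbb{R}^{n\times m}$ has column $\partial 1_e=1_s-1_t$ for $e=(s,t)$, where $1_x$ denotes the indicator vector of a vertex or edge $x$. $W\in\mathbb{R}^{m\times m}$ is the diagonal matrix of edge weights, $\widetilde\partial=\partial W^{1/2}$, and the graph Laplacian is $L=\partial W\partial^{T}=\widetilde\partial\widetilde\partial^{T}$ (equivalently $D-A$ with $D$ the weighted degree matrix and $A$ the weighted adjacency matrix). $M^{+}$ denotes the Moore–Penrose pseudoinverse, and $L^{2+}=(L^{+})^2$. The down Laplacian is $L^{\mathrm{down}}=\widetilde\partial^{T}\widetilde\partial=W^{1/2}\partial^{T}\partial W^{1/2}\in\mathbb{R}^{m\times m}$. The biharmonic distance between vertices $s,t$ is $B_{st}=\sqrt{(1_s-1_t)^{T}L^{2+}(1_s-1_t)}$, and for an edge $e=\{s,t\}$, $B_e:=B_{st}$. *)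

(* Defs.v *)
From HB Require Import structures.
From mathcomp Require Import all_boot all_order all_algebra.
From mathcomp Require Import reals.
From Stdlib Require Import ClassicalEpsilon.
Set Implicit Arguments. Unset Strict Implicit. Unset Printing Implicit Defensive.
Import Order.TTheory GRing.Theory Num.Theory.
Local Open Scope ring_scope.

Definition is_mp_pinv (R : realType) (p q : nat)
    (A : 'M[R]_(p, q)) (X : 'M[R]_(q, p)) : Prop :=
  [/\ A *m X *m A = A, X *m A *m X = X,
      (A *m X)^T = A *m X & (X *m A)^T = X *m A].

Definition pinv (R : realType) (p q : nat) (A : 'M[R]_(p, q)) : 'M[R]_(q, p) :=
  epsilon (inhabits 0) (is_mp_pinv A).

Definition boundary (R : realType) (n m : nat) (src dst : 'I_m -> 'I_n)
  : 'M[R]_(n, m) :=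
  \matrix_(v < n, e < m) (((v == src e)%:R) - ((v == dst e)%:R)).

Definition Wmat (R : realType) (m : nat) (w : 'I_m -> R) : 'M[R]_m :=
  diag_mx (\row_e w e).
Definition Whalf (R : realType) (m : nat) (w : 'I_m -> R) : 'M[R]_m :=
  diag_mx (\row_e Num.sqrt (w e)).

Definition dtilde (R : realType) (n m : nat) (src dst : 'I_m -> 'I_n)
  (w : 'I_m -> R) : 'M[R]_(n, m) :=
  boundary R src dst *m Whalf w.

Definition laplacian (R : realType) (n m : nat) (src dst : 'I_m -> 'I_n)
  (w : 'I_m -> R) : 'M[R]_n :=
  boundary R src dst *m Wmat w *m (boundary R src dst)^T.

Definition down_laplacian (R : realType) (n m : nat) (src dst : 'I_m -> 'I_n)
  (w : 'I_m -> R) : 'M[R]_m :=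
  (dtilde src dst w)^T *m dtilde src dst w.

Definition ind (R : realType) (k : nat) (x : 'I_k) : 'cV[R]_k := delta_mx x 0.

Definition biharmonic (R : realType) (n m : nat) (src dst : 'I_m -> 'I_n)
  (w : 'I_m -> R) (s t : 'I_n) : R :=
  let d := ind R s - ind R t in
  let Lp := pinv (laplacian src dst w) in
  Num.sqrt ((d^T *m (Lp *m Lp) *m d) 0 0).

Definition biharmonic_edge (R : realType) (n m : nat) (src dst : 'I_m -> 'I_n)
  (w : 'I_m -> R) (e : 'I_m) : R :=
  biharmonic src dst w (src e) (dst e).

(* Main.v *)
Require Import Defs.
From HB Require Import structures.
From mathcomp Require Import all_boot all_order all_algebra.
From mathcomp Require Import reals.
From Stdlib Require Import ClassicalEpsilon.
Set Implicit Arguments. Unset Strict Implicit.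
Import Order.TTheory GRing.Theory Num.Theory.
Local Open Scope ring_scope.

Section MP.
Variable R : realType.

Lemma MMt0 p q (M : 'M[R]_(p, q)) : M *m M^T = 0 -> M = 0.
Proof.
move=> H; apply/matrixP => i j; rewrite mxE.
have := congr1 (fun A : 'M[R]_p => A i i) H; rewrite !mxE => Hs.
have hp : forall k, predT k -> 0 <= M i k * M^T k i.
  by move=> k _; rewrite mxE -expr2 sqr_ge0.
have := @psumr_eq0P R _ predT (fun k => M i k * M^T k i) hp Hs j isT.
rewrite !mxE => h; apply/eqP; rewrite -[_ == _]orbb -mulf_eq0; exact/eqP.
Qed.

Lemma free_unit r q (C : 'M[R]_(r, q)) : row_free C -> C *m C^T \in unitmx.
Proof.
move=> fC; rewrite -row_free_unit; apply: inj_row_free => v Hv.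
have : (v *m C) *m (v *m C)^T = 0.
  by rewrite trmx_mul mulmxA -(mulmxA v) Hv mul0mx.
by move/MMt0 => /eqP; rewrite mulmx_free_eq0 // => /eqP.
Qed.

Lemma mp_factor p r q (B : 'M[R]_(p, r)) (C : 'M[R]_(r, q)) :
  row_free C -> row_free B^T -> exists X, is_mp_pinv (B *m C) X.
Proof.
move=> fC fBt.
have uC := free_unit fC.
have uB : B^T *m B \in unitmx by have := free_unit fBt; rewrite trmxK.
set A := B *m C.
set iC := invmx (C *m C^T); set iB := invmx (B^T *m B).
have tiC : iC^T = iC by rewrite /iC trmx_inv trmx_mul trmxK.
have tiB : iB^T = iB by rewrite /iB trmx_inv trmx_mul trmxK.
have kC : C *m C^T *m iC = 1%:M by rewrite mulmxV.
have kB : iB *m (B^T *m B) = 1%:M by rewrite mulVmx.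
have kC' : forall k (Y : 'M[R]_(k, r)), Y *m C *m C^T *m iC = Y.
  by move=> k Y; rewrite -!mulmxA (mulmxA C) kC mulmx1.
have kB' : forall k (Y : 'M[R]_(k, r)), Y *m iB *m B^T *m B = Y.
  by move=> k Y; rewrite -!mulmxA kB mulmx1.
exists (C^T *m iC *m iB *m B^T).
have AX : A *m (C^T *m iC *m iB *m B^T) = B *m iB *m B^T.
  by rewrite /A !mulmxA kC'.
have XA : (C^T *m iC *m iB *m B^T) *m A = C^T *m iC *m C.
  by rewrite /A !mulmxA kB'.
split.
- by rewrite AX /A !mulmxA kB'.
- by rewrite XA !mulmxA kC'.
- by rewrite AX !trmx_mul trmxK tiB mulmxA.
- by rewrite XA !trmx_mul trmxK tiC mulmxA.
Qed.

Lemma mp_exists p q (A : 'M[R]_(p, q)) : is_mp_pinv A (pinv A).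
Proof.
rewrite /pinv; apply: epsilon_spec.
have fC : row_free (row_base A) by apply: row_base_free.
have fBt : row_free (col_base A)^T.
  by rewrite /row_free mxrank_tr; apply: col_base_full.
by have := mp_factor fC fBt; rewrite mulmx_base.
Qed.

Lemma mp_unique p q (A : 'M[R]_(p, q)) X Y :
  is_mp_pinv A X -> is_mp_pinv A Y -> X = Y.
Proof.
case=> [h1 h2 h3 h4] [k1 k2 k3 k4].
have f1 : A^T = A^T *m (A *m Y).
  by have := trmx_mul (A *m Y) A; rewrite k1 k3.
have f2 : A^T = (X *m A) *m A^T.
  by have := trmx_mul A (X *m A); rewrite mulmxA h1 h4.
have eX : X = X *m A *m Y.
  have e1 : X = X *m X^T *m A^T by rewrite -mulmxA -trmx_mul h3 mulmxA h2.
  by rewrite {1}e1 {1}f1 !mulmxA -(mulmxA X X^T) -trmx_mul h3 (mulmxA X A X) h2.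
have eY : Y = X *m A *m Y.
  have e1 : Y = A^T *m Y^T *m Y by rewrite -trmx_mul k4 k2.
  have t : A^T *m Y^T = Y *m A by rewrite -trmx_mul k4.
  by rewrite {1}e1 {1}f2 -(mulmxA (X *m A) A^T Y^T) t -(mulmxA (X *m A) (Y *m A) Y) k2.
by rewrite eX -eY.
Qed.

Lemma pinv_spec p q (A : 'M[R]_(p, q)) X : is_mp_pinv A X -> pinv A = X.
Proof. by move=> hX; apply: mp_unique hX; apply: mp_exists. Qed.

Lemma mp_tr p q (A : 'M[R]_(p, q)) X : is_mp_pinv A X -> is_mp_pinv A^T X^T.
Proof.
case=> [h1 h2 h3 h4]; split.
- by rewrite -!trmx_mul mulmxA h1.
- by rewrite -!trmx_mul mulmxA h2.
- by rewrite -trmx_mul h4.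
- by rewrite -trmx_mul h3.
Qed.

Lemma mp_gram p q (A : 'M[R]_(p, q)) X :
  is_mp_pinv A X -> is_mp_pinv (A^T *m A) (X *m X^T).
Proof.
move=> [h1 h2 h3 h4].
have g1 : A^T *m A *m X = A^T.
  by rewrite -mulmxA -h3 -trmx_mul h1.
have g2 : A^T *m X^T = X *m A by rewrite -trmx_mul h4.
have AX : A^T *m A *m (X *m X^T) = X *m A by rewrite mulmxA g1 g2.
have XA : X *m X^T *m (A^T *m A) = X *m A.
  by rewrite -mulmxA (mulmxA X^T) -trmx_mul h3 h1.
split.
- have f2 : A^T = (X *m A) *m A^T.
    by have := trmx_mul A (X *m A); rewrite mulmxA h1 h4.
  by rewrite AX mulmxA -f2.
- by rewrite XA mulmxA h2.
- by rewrite AX h4.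
- by rewrite XA h4.
Qed.
End MP.

Lemma quad_delta (R : realType) k (M : 'M[R]_k) (e : 'I_k) :
  ((ind R e)^T *m M *m ind R e) 0 0 = M e e.
Proof. by rewrite /ind trmx_delta -rowE -colE !mxE. Qed.

Theorem theorem3p1 (R : realType) (n m : nat) (src dst : 'I_m -> 'I_n)
    (w : 'I_m -> R)
    (Hloop : forall e, src e != dst e)
    (Hsimple : forall e f, e != f ->
       ~ ((src e == src f) && (dst e == dst f)
          || (src e == dst f) && (dst e == src f)))
    (Hw : forall e, 0 < w e)
    (e : 'I_m) :
  w e * (biharmonic_edge src dst w e) ^+ 2 = pinv (down_laplacian src dst w) e e
  /\ pinv (down_laplacian src dst w) e e
     = \sum_(v < n) (pinv (dtilde src dst w) e v) ^+ 2.
Proof.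
set D := dtilde src dst w.
set P := pinv D.
have hP : is_mp_pinv D P by apply: mp_exists.
have hdown : pinv (down_laplacian src dst w) = P *m P^T.
  by apply: pinv_spec; apply: mp_gram.
have hHH : Whalf w *m (Whalf w)^T = Wmat w.
  rewrite /Whalf tr_diag_mx mulmx_diag /Wmat; congr diag_mx.
  by apply/matrixP => i j; rewrite !mxE -expr2 sqr_sqrtr // ltW.
have hlap : laplacian src dst w = D *m D^T.
  by rewrite /D /dtilde trmx_mul mulmxA -(mulmxA _ (Whalf w)) hHH.
have hL : pinv (laplacian src dst w) = P^T *m P.
  by rewrite hlap; apply: pinv_spec; have := mp_gram (mp_tr hP); rewrite !trmxK; apply.
have hsum : (P *m P^T) e e = \sum_(v < n) P e v ^+ 2.
  by rewrite mxE; apply: eq_bigr => v _; rewrite mxE expr2.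
rewrite hdown hsum; split => //.
case: hP => [h1 h2 h3 h4].
have we := Hw e.
set s := Num.sqrt (w e).
have s0 : 0 < s by rewrite sqrtr_gt0.
have hd : ind R (src e) - ind R (dst e) = s^-1 *: (D *m ind R e).
  have -> : D *m ind R e = s *: (boundary R src dst *m ind R e).
    rewrite /D /dtilde -mulmxA scalemxAr; congr (_ *m _).
    apply/matrixP => i j; rewrite mul_diag_mx !mxE.
    by case: (eqVneq i e) => [->|_]; rewrite ?mulr1 ?mulr0.
  rewrite scalerA mulVf ?gt_eqF // scale1r.
  apply/matrixP => i j; rewrite [j]ord1 /ind !mxE.
  rewrite (bigD1 e) //= big1 => [|k ke]; last by rewrite !mxE (negbTE ke) mulr0.
  by rewrite !mxE !eqxx /= !andbT mulr1 addr0.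
have k1 : D^T *m P^T *m P = P.
  by rewrite -trmx_mul h4 h2.
have k2 : P^T *m P *m D = P^T.
  by rewrite -mulmxA -h4 trmx_mul mulmxA -!trmx_mul mulmxA h2.
have hx : (P *m P^T) e e = \sum_(v < n) P e v ^+ 2 by [].
have x0 : 0 <= (P *m P^T) e e by rewrite hsum sumr_ge0 // => v _; rewrite sqr_ge0.
rewrite /biharmonic_edge /biharmonic /= hL hd.
have -> : ((s^-1 *: (D *m ind R e))^T *m (P^T *m P *m (P^T *m P)) *m
   (s^-1 *: (D *m ind R e))) 0 0 = (w e)^-1 * (P *m P^T) e e.
  have ht : forall (X : 'cV[R]_n), (s^-1 *: X)^T = s^-1 *: X^T.
    by move=> X; apply/matrixP => i j; rewrite !mxE.
  have k2' : P^T *m (P *m D) = P^T by rewrite mulmxA k2.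
  have hQ : D^T *m (P^T *m P *m (P^T *m P)) *m D = P *m P^T.
    by rewrite !mulmxA k1 -!mulmxA k2'.
  have hq : (D *m ind R e)^T *m (P^T *m P *m (P^T *m P)) *m (D *m ind R e)
     = (ind R e)^T *m (D^T *m (P^T *m P *m (P^T *m P)) *m D) *m ind R e.
    by rewrite trmx_mul !mulmxA.
  rewrite linearZ /= ht -!scalemxAl scalerA hq hQ [LHS]mxE quad_delta.
  by rewrite -invfM -expr2 sqr_sqrtr // ltW.
rewrite sqr_sqrtr; last by rewrite mulr_ge0 // invr_ge0 ltW.
by rewrite mulrA mulfV ?gt_eqF // mul1r.
Qed.
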